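(* Let $m\ge 38$ be even and let $G$ be a graph with maximum spectral radius among all $H(4,3)$-free graphs with $m$ edges and no isolated vertices. Let $\mathbf{x}$ be the Perron vector of $G$, $u^*$ a vertex maximizing $x_{u^*}$, $N = N(u^* )$, and $A_+ = \{v\in N : d_N(v)\ge 1\}$. Then $A_+\neq\emptyset$, i.e. $N(u^* )$ spans at least one edge.
   Context: All graphs are simple and undirected; $\rho(G)$ is the largest adjacency eigenvalue and the Perron vector is the positive unit eigenvector for $\rho(G)$ (the extremal $G$ is connected). $H(4,3)$ is the graph formed by a cycle of length $4$ and a triangle sharing exactly one common vertex. $N(v)$ denotes the neighbourhood of $v$ and $d_S(v)=|N(v)\cap S|$. *)

(* Defs.v *)
From HB Require Import structures.
From mathcomp Require Import all_boot all_order all_algebra.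
From mathcomp Require Import reals.
Set Implicit Arguments. Unset Strict Implicit. Unset Printing Implicit Defensive.
Import Order.TTheory GRing.Theory Num.Theory.
Local Open Scope ring_scope.

Definition simple_graph (T : finType) (e : rel T) : Prop :=
  symmetric e /\ irreflexive e.

Definition nedges (T : finType) (e : rel T) : nat :=
  #|[set A : {set T} | [exists x, exists y, e x y && (A == [set x; y])]]|.

Definition no_isolated (T : finType) (e : rel T) : Prop :=
  forall v : T, exists w : T, e v w.

(* H(4,3): a 4-cycle 0-1-2-3-0 and a triangle 0-4-5-0 sharing vertex 0. *)
Definition H43_edge_list : seq (nat * nat) :=
  [:: (0, 1); (1, 2); (2, 3); (3, 0); (0, 4); (4, 5); (5, 0)]%N.

Definition H43_rel : rel 'I_6 :=
  fun i j => ((nat_of_ord i, nat_of_ord j) \in H43_edge_list)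
          || ((nat_of_ord j, nat_of_ord i) \in H43_edge_list).

Definition contains_H43 (T : finType) (e : rel T) : Prop :=
  exists f : 'I_6 -> T, injective f /\ forall i j, H43_rel i j -> e (f i) (f j).

Definition H43_free (T : finType) (e : rel T) : Prop := ~ contains_H43 e.

Definition adjmx (R : realType) (T : finType) (e : rel T) : 'M[R]_#|T| :=
  \matrix_(i, j) (e (enum_val i) (enum_val j))%:R.

Definition is_spectral_radius (R : realType) (T : finType) (e : rel T) (r : R) : Prop :=
  eigenvalue (adjmx R e) r /\
  forall l : R, eigenvalue (adjmx R e) l -> l <= r.

Definition extremal_H43 (R : realType) (m : nat) (T : finType) (e : rel T) : Prop :=
  [/\ simple_graph e, H43_free e, nedges e = m, no_isolated e &
   exists r : R, is_spectral_radius e r /\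
     forall (T' : finType) (e' : rel T') (r' : R),
       simple_graph e' -> H43_free e' -> nedges e' = m -> no_isolated e' ->
       is_spectral_radius e' r' -> r' <= r].

Definition perron_vector (R : realType) (T : finType) (e : rel T) (x : 'rV[R]_#|T|) : Prop :=
  exists r : R, [/\ is_spectral_radius e r,
    x *m adjmx R e = r *: x,
    forall i, 0 < x 0 i &
    \sum_i x 0 i ^+ 2 = 1].

(* Main.v *)
Require Import Defs.
From HB Require Import structures.
From mathcomp Require Import all_boot all_order all_algebra.
From mathcomp Require Import reals.
From mathcomp Require Import zify ring lra.
Import Order.TTheory GRing.Theory Num.Theory.
Local Open Scope ring_scope.

Section PA.

Lemma sum_enum (R : realType) (T : finType) (F : T -> R) :
  \sum_(k < #|T|) F (enum_val k) = \sum_x F x.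
Proof. by rewrite -(big_enum_val (A := T)). Qed.

Lemma eig_of (R : realType) (T : finType) (e : rel T) (z : T -> R) (l : R) :
  (exists t, z t != 0) -> (forall j, \sum_i (e i j)%:R * z i = l * z j) ->
  eigenvalue (adjmx R e) l.
Proof.
move=> [t zt] H; apply/eigenvalueP; exists (\row_(k < #|T|) z (enum_val k)).
  apply/rowP => j; rewrite !mxE -H -(@sum_enum R T (fun i => (e i (enum_val j))%:R * z i)).
  by apply: eq_bigr => k _; rewrite !mxE mulrC.
apply/negP => /eqP/rowP/(_ (enum_rank t)).
by rewrite !mxE enum_rankK; move/eqP: zt.
Qed.

Lemma perron_ub (R : realType) (T : finType) (e : rel T) (y : T -> R) (l lam : R) :
  (forall t, 0 < y t) -> (forall j, \sum_i (e i j)%:R * y i <= lam * y j) ->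
  eigenvalue (adjmx R e) l -> l <= lam.
Proof.
move=> yp Hy /eigenvalueP [v Hv nz].
pose w t := v 0 (enum_rank t).
have Hw : forall j, \sum_i (e i j)%:R * w i = l * w j.
  move=> j; move/rowP/(_ (enum_rank j)): Hv; rewrite !mxE => <-.
  rewrite -(@sum_enum R T (fun i => (e i j)%:R * w i)); apply: eq_bigr => k _; rewrite !mxE /w enum_valK enum_rankK mulrC //.
have [t0 wt0] : exists t, w t != 0.
  apply/existsP; apply: contraR nz => /existsPn H; apply/eqP/rowP => k.
  rewrite mxE.
  by have := H (enum_val k); rewrite /w enum_valK negbK => /eqP.
case: (@arg_maxP _ R T t0 predT (fun i => `|w i| / y i) isT) => j _ Hmax.
set c := `|w j| / y j in Hmax.
have Hb : forall i, `|w i| <= c * y i.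
  move=> i; have := Hmax i isT; rewrite /= ler_pdivrMr //.
have cpos : 0 < c.
  apply: lt_le_trans (Hmax t0 isT); apply: divr_gt0 => //; by rewrite normr_gt0.
have wjpos : 0 < `|w j|.
  by move: cpos; rewrite /c pmulr_lgt0 ?invr_gt0.
have : `|l| * `|w j| <= lam * `|w j|.
  rewrite -normrM -Hw.
  apply: le_trans (ler_norm_sum _ _ _) _.
  apply: le_trans (_ : \sum_i (e i j)%:R * (c * y i) <= _).
    apply: ler_sum => k _; rewrite normrM ger0_norm ?ler0n //.
    by apply: ler_wpM2l; rewrite ?ler0n.
  under eq_bigr do rewrite mulrCA.
  rewrite -mulr_sumr.
  apply: le_trans (ler_wpM2l (ltW cpos) (Hy j)) _.
  by rewrite /c mulrCA divfK ?gt_eqF.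
rewrite ler_pM2r // => H; exact: le_trans (ler_norm _) H.
Qed.

End PA.

Section PB.
Local Close Scope ring_scope.

Lemma set2_eq (T : finType) (a b x y : T) : a != b ->
  ([set a; b] == [set x; y]) = ((a == x) && (b == y)) || ((a == y) && (b == x)).
Proof.
move=> ab; apply/idP/idP.
  move/eqP=> E.
  have ha : a \in [set x; y] by rewrite -E set21.
  have hb : b \in [set x; y] by rewrite -E set22.
  rewrite !inE in ha hb.
  case/orP: ha => /eqP ?; case/orP: hb => /eqP ?; subst;
    by rewrite ?eqxx ?orbT // in ab *.
by case/orP => /andP[/eqP-> /eqP->] //; rewrite setUC.
Qed.

Lemma card_bool_sum (T : finType) (P : pred T) :
  (\sum_x (P x : nat) = #|P|)%N.
Proof. rewrite -sum1_card [RHS]big_mkcond /=; apply: eq_bigr => x _; by rewrite unfold_in; case: (P x). Qed.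

Lemma card_set_sum (T : finType) (P : {set T}) :
  (\sum_x ((x \in P) : nat) = #|P|)%N.
Proof. rewrite -sum1_card [RHS]big_mkcond /=; apply: eq_bigr => x _; by case: (x \in P). Qed.

Lemma nedges_double (T : finType) (e : rel T) : simple_graph e ->
  (2 * nedges e = \sum_x \sum_y (e x y : nat))%N.
Proof.
move=> [sy irr].
set E := [set A : {set T} | [exists x, exists y, e x y && (A == [set x; y])]].
rewrite pair_bigA /=.
have -> : (\sum_(p : T * T) (e p.1 p.2 : nat) = \sum_(p | e p.1 p.2) 1)%N.
  by rewrite [RHS]big_mkcond /=; apply: eq_bigr => p _; case: (e p.1 p.2).
rewrite (partition_big (fun p : T * T => [set p.1; p.2]) (mem E)) /=; last first.
  move=> [a b] /= eab; rewrite inE; apply/existsP; exists a; apply/existsP; exists b.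
  by rewrite eab eqxx.
rewrite /nedges -/E mulnC -sum1_card big_distrl /=.
apply: eq_bigr => A; rewrite inE => /existsP[x /existsP[y /andP[exy /eqP ->]]].
rewrite mul1n.
have xy : x != y by apply: contraTneq exy => ->; rewrite irr.
symmetry; transitivity #|[set (x, y); (y, x)]|; last by rewrite cards2 xpair_eqE (negbTE xy).
rewrite -sum1_card; apply: eq_bigl => -[a b] /=.
rewrite !inE !xpair_eqE.
case eab: (e a b) => /=.
  by rewrite set2_eq //; apply: contraTneq eab => ->; rewrite irr.
apply/esym/negbTE; apply: contraFN eab => /orP[]/andP[/eqP-> /eqP->] //.
by rewrite sy.
Qed.

Lemma indep_count (T : finType) (e : rel T) (u : T) : simple_graph e ->
  (forall v w, e u v -> e u w -> ~~ e v w) ->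
  (\sum_(v | e u v) \sum_w (e v w : nat) <= nedges e)%N.
Proof.
move=> [sy irr] ind.
set E := [set A : {set T} | [exists x, exists y, e x y && (A == [set x; y])]].
set P := [set p : T * T | e u p.1 && e p.1 p.2].
have -> : (\sum_(v | e u v) \sum_w (e v w : nat) = #|P|)%N.
  transitivity (\sum_v \sum_w ((e u v && e v w) : nat))%N.
    rewrite big_mkcond; apply: eq_bigr => v _; case: (e u v) => //=; by rewrite big1.
  rewrite pair_bigA /= -card_set_sum; apply: eq_bigr => -[a b] _ /=.
  by rewrite inE.
apply: (@leq_trans #|[set [set p.1; p.2] | p in P]|).
  rewrite card_in_imset //.
  move=> [a b] [c d]; rewrite !inE /= => /andP[ua eab] /andP[uc ecd] /eqP.
  have ab : a != b by apply: contraTneq eab => ->; rewrite irr.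
  rewrite set2_eq // => /orP[]/andP[/eqP ad /eqP bc]; first by rewrite ad bc.
  by have := ind _ _ ua uc; rewrite -bc eab.
apply: subset_leq_card; apply/subsetP => A /imsetP[[a b] Hp ->].
move: Hp; rewrite /P inE /= => /andP[_ eab]; rewrite inE; apply/existsP; exists a; apply/existsP; exists b.
by rewrite eab eqxx.
Qed.

End PB.

Section PC.

Lemma eig_eq (R : realType) (T : finType) (e : rel T) (v : 'rV[R]_#|T|) (l : R) :
  v *m adjmx R e = l *: v ->
  forall j, \sum_i (e i j)%:R * v 0 (enum_rank i) = l * v 0 (enum_rank j).
Proof.
move=> Hv j; move/rowP/(_ (enum_rank j)): Hv; rewrite !mxE => <-.
rewrite -(@sum_enum R T (fun i => (e i j)%:R * v 0 (enum_rank i))).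
by apply: eq_bigr => k _; rewrite !mxE enum_valK enum_rankK mulrC.
Qed.

Lemma main_bound (R : realType) (T : finType) (e : rel T) (x : 'rV[R]_#|T|) (r : R) (u : T) :
  simple_graph e -> x *m adjmx R e = r *: x -> (forall i, 0 < x 0 i) ->
  (forall v, x 0 (enum_rank v) <= x 0 (enum_rank u)) ->
  (forall v w, e u v -> e u w -> ~~ e v w) -> r ^+ 2 <= (nedges e)%:R.
Proof.
move=> sg Hx xp xmax ind; have [sy irr] := sg.
pose w t := x 0 (enum_rank t).
have Hw := @eig_eq _ _ _ _ _ Hx.
have ru : r * w u = \sum_(v | e u v) w v.
  rewrite -Hw [RHS]big_mkcond /=; apply: eq_bigr => i _; rewrite sy.
  by rewrite /w; case: (e u i); rewrite ?mul1r ?mul0r.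
have wup : 0 < w u by apply: xp.
suff : r ^+ 2 * w u <= (nedges e)%:R * w u by rewrite ler_pM2r.
rewrite expr2 -mulrA ru mulr_sumr.
apply: le_trans (_ : \sum_(v | e u v) \sum_i (e v i)%:R * w u <= _).
  apply: ler_sum => v _; rewrite /w -Hw; apply: ler_sum => i _.
  rewrite sy; apply: ler_wpM2l; first by rewrite ler0n.
  exact: xmax.
rewrite (eq_bigr (fun v => (\sum_i (e v i)%:R) * w u)); last by move=> v _; rewrite mulr_suml.
rewrite -mulr_suml ler_pM2r //.
have := @indep_count _ _ _ sg ind.
rewrite -(ler_nat R) => H; apply: le_trans H.
by rewrite natr_sum; apply: ler_sum => v _; rewrite natr_sum.
Qed.

End PC.

Section PD.
Local Close Scope ring_scope.

Definition ee (i j : nat) : bool :=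
  [|| (i < 2) && (j < 2) && (i != j), (i < 2) && (4 <= j), (4 <= i) && (j < 2),
      (i == 2) && (j == 3) | (i == 3) && (j == 2)].

Definition eB (s : nat) : rel 'I_s.+4 := fun i j => ee i j.

Lemma ee_sym i j : ee i j = ee j i.
Proof. rewrite /ee; apply/idP/idP; lia. Qed.

Lemma ee_tri x y z : ee x y -> ee y z -> ee x z ->
 ((x < 2) && (y < 2)) || ((x < 2) && (z < 2)) || ((y<2) && (z < 2)).
Proof. rewrite /ee. lia. Qed.

Lemma ee_cyc a b c d : ee a b -> ee b c -> ee c d -> ee d a -> a != c -> b != d ->
 ((a < 2) && (c < 2)) || ((b < 2) && (d < 2)).
Proof. rewrite /ee. lia. Qed.

Lemma fin6 (a b c d x y : nat) :
  ((a < 2) && (x < 2)) || ((a < 2) && (y < 2)) || ((x<2) && (y < 2)) ->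
  ((a < 2) && (c < 2)) || ((b < 2) && (d < 2)) ->
  a != b -> a != c -> a != d -> a != x -> a != y -> b != c -> b != d -> b != x ->
  b != y -> c != d -> c != x -> c != y -> d != x -> d != y -> x != y -> False.
Proof.
have K : forall p q r : nat, p < 2 -> q < 2 -> r < 2 -> p != q -> p != r -> q != r -> False.
  move=> p q r; lia.
move=> T C ab ac ad ax ay bc bd bx by_ cd cx cy dx dy xy.
move: T => /orP[/orP[/andP[h1 h2]|/andP[h1 h2]]|/andP[h1 h2]]; move: C => /orP[/andP[h3 h4]|/andP[h3 h4]].
- by apply: (K a x c) => //; rewrite eq_sym.
- by apply: (K a x b) => //; rewrite eq_sym.
- by apply: (K a y c) => //; rewrite eq_sym.
- by apply: (K a y b) => //; rewrite eq_sym.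
- by apply: (K x y a) => //; rewrite eq_sym.
- by apply: (K x y b) => //; rewrite eq_sym.
Qed.

Lemma eB_simple s : simple_graph (eB s).
Proof.
split; first by move=> i j; rewrite /eB ee_sym.
by move=> i; rewrite /eB /ee; apply/negbTE; lia.
Qed.

Lemma eB_free s : H43_free (eB s).
Proof.
move=> [f [inj Hf]].
pose o (k : nat) (h : (k < 6)%N) := @Ordinal 6 k h.
have d : forall i j : 'I_6, i != j -> (nat_of_ord (f i) != nat_of_ord (f j)).
  move=> i j; apply: contra => /eqP /val_inj /inj ->; by [].
have e01 := Hf (o 0 isT) (o 1 isT) isT.
have e12 := Hf (o 1 isT) (o 2 isT) isT.
have e23 := Hf (o 2 isT) (o 3 isT) isT.
have e30 := Hf (o 3 isT) (o 0 isT) isT.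
have e04 := Hf (o 0 isT) (o 4 isT) isT.
have e45 := Hf (o 4 isT) (o 5 isT) isT.
have e50 := Hf (o 5 isT) (o 0 isT) isT.
have d01 := d (o 0 isT) (o 1 isT) isT.
have d02 := d (o 0 isT) (o 2 isT) isT.
have d03 := d (o 0 isT) (o 3 isT) isT.
have d04 := d (o 0 isT) (o 4 isT) isT.
have d05 := d (o 0 isT) (o 5 isT) isT.
have d12 := d (o 1 isT) (o 2 isT) isT.
have d13 := d (o 1 isT) (o 3 isT) isT.
have d14 := d (o 1 isT) (o 4 isT) isT.
have d15 := d (o 1 isT) (o 5 isT) isT.
have d23 := d (o 2 isT) (o 3 isT) isT.
have d24 := d (o 2 isT) (o 4 isT) isT.
have d25 := d (o 2 isT) (o 5 isT) isT.
have d34 := d (o 3 isT) (o 4 isT) isT.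
have d35 := d (o 3 isT) (o 5 isT) isT.
have d45 := d (o 4 isT) (o 5 isT) isT.
rewrite /eB in e01 e12 e23 e30 e04 e45 e50.
rewrite ee_sym in e50.
have t := @ee_tri _ _ _ e04 e45 e50.
have c := @ee_cyc _ _ _ _ e01 e12 e23 e30 d02 d13.
exact: (@fin6 _ _ _ _ _ _ t c d01 d02 d03 d04 d05 d12 d13 d14 d15 d23 d24 d25 d34 d35 d45).
Qed.

Lemma sumI4 (R : Type) (idx : R) (op : R -> R -> R) (F : nat -> R) s :
  \big[op/idx]_(i < s.+4) F i =
  op (F 0) (op (F 1) (op (F 2) (op (F 3) (\big[op/idx]_(4 <= i < s.+4) F i)))).
Proof. by rewrite -(big_mkord xpredT) big_ltn // big_ltn // big_ltn // big_ltn. Qed.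

Definition nb (k : nat) : nat :=
  if k == 0 then 1 else if k == 1 then 0 else if k == 2 then 3 else if k == 3 then 2 else 0.

Lemma eB_noiso s : no_isolated (eB s).
Proof.
move=> v; exists (inord (nb v)); rewrite /eB inordK; last first.
  rewrite /nb; case: (v : nat) => [|[|[|[|k]]]] //=.
case: v => v hv /=; case: v hv => [|[|[|[|k]]]] //=.
Qed.

Lemma ee_big x i : 4 <= i -> ee x i = (x < 2).
Proof.
move=> h; rewrite /ee; case: (x < 2) => /=.
  by rewrite h /= orbT.
have h2 : (i < 2) = false by apply/negbTE; lia.
have h3 : (i == 2) = false by apply/negbTE; lia.
have h4 : (i == 3) = false by apply/negbTE; lia.
by rewrite h2 h3 h4 !andbF.
Qed.

Lemma eB_rowsum s (x : nat) :
  (\sum_(y < s.+4) (ee x y : nat) = ee x 0 + (ee x 1 + (ee x 2 + (ee x 3 + s * (x < 2)))))%N.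
Proof.
rewrite (@sumI4 _ 0%N addn (fun y => nat_of_bool (ee x y)) s) (eq_big_nat _ _ (F2 := fun _ => (x < 2 : nat))); last first.
  by move=> i /andP[h _]; rewrite ee_big.
by rewrite sum_nat_const_nat subSS subSS subSS subSS subn0.
Qed.

Lemma eB_nedges s : nedges (eB s) = (2 * s + 2)%N.
Proof.
have := @nedges_double _ _ (eB_simple s).
have -> : (\sum_(x : 'I_s.+4) \sum_(y : 'I_s.+4) (eB s x y : nat) = 4 * s + 4)%N.
  rewrite (eq_bigr (fun x : 'I_s.+4 => ee x 0 + (ee x 1 + (ee x 2 + (ee x 3 + s * (x < 2)))))%N); last first.
    by move=> x _; rewrite -eB_rowsum.
  rewrite (@sumI4 _ 0%N addn (fun x => ee x 0 + (ee x 1 + (ee x 2 + (ee x 3 + s * (x < 2)))))%N s).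
  rewrite (eq_big_nat _ _ (F2 := fun _ => 2%N)); last first.
    move=> i /andP[h _]; rewrite (ee_sym i 0) (ee_sym i 1) (ee_sym i 2) (ee_sym i 3) !ee_big //.
    have -> : (i < 2) = false by apply/negbTE; lia.
    by rewrite muln0.
  rewrite sum_nat_const_nat subSS subSS subSS subSS subn0 /=; lia.
lia.
Qed.

End PD.

Section PE.

Lemma colsum (R : realType) s (F : nat -> R) (j : nat) :
  (forall i, (4 <= i)%N -> F i = 1) ->
  \sum_(i < s.+4) (ee i j)%:R * F i =
  (ee 0 j)%:R * F 0%N + ((ee 1 j)%:R * F 1%N + ((ee 2 j)%:R * F 2%N +
    ((ee 3 j)%:R * F 3%N + ((j < 2)%N%:R *+ s)))).
Proof.
move=> HF.
rewrite (@sumI4 _ 0 +%R (fun i => (ee i j)%:R * F i) s).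
rewrite (eq_big_nat _ _ (F2 := fun _ => (j < 2)%N%:R)); last first.
  by move=> i /andP[h _]; rewrite HF // mulr1 ee_sym ee_big.
by rewrite sumr_const_nat subSS subSS subSS subSS subn0.
Qed.

Lemma eB_spec (R : realType) s (lam : R) :
  lam ^+ 2 = lam + 2 * s%:R -> 2 < lam -> is_spectral_radius (eB s) lam.
Proof.
move=> Hl l2.
pose Z (k : nat) : R := if (k < 2)%N then lam / 2 else if (k < 4)%N then 0 else 1.
pose Y (k : nat) : R := if (k < 2)%N then lam / 2 else 1.
have Zb : forall i, (4 <= i)%N -> Z i = 1.
  by move=> i h; rewrite /Z ltnNge (leq_trans _ h) // ltnNge h.
have Yb : forall i, (4 <= i)%N -> Y i = 1.
  by move=> i h; rewrite /Y ltnNge (leq_trans _ h).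
split; last first.
  move=> l; apply: (@perron_ub _ _ _ (fun i : 'I_s.+4 => Y i)).
    move=> t; rewrite /Y; case: ifP => _; lra.
  move=> j; rewrite /eB (@colsum _ s _ _ Yb).
  case: j => -[|[|[|[|k]]]] hj /=; rewrite /Y /=.
  all: try (by rewrite /ee /=; lra).
apply: (@eig_of _ _ _ (fun i : 'I_s.+4 => Z i)).
  exists ord0; rewrite /Z /=; apply/eqP; lra.
move=> j; rewrite /eB (@colsum _ s _ _ Zb).
case: j => -[|[|[|[|k]]]] hj /=; rewrite /Z /=.
all: by rewrite /ee /=; lra.
Qed.

End PE.


Theorem claim1 (R : realType) (m : nat) (T : finType) (e : rel T)
  (x : 'rV[R]_#|T|) (ustar : T) :
  (38 <= m)%N -> ~~ odd m ->
  extremal_H43 R m e ->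
  perron_vector e x ->
  (forall v : T, x 0 (enum_rank v) <= x 0 (enum_rank ustar)) ->
  exists v : T, exists w : T, [/\ e ustar v, e ustar w & e v w].
Proof.
move=> m38 hodd [sg free ne noiso [r [[reig rmax] Hall]]] [r1 [[r1eig r1max] Hx xpos _]] xmax.
have hm2 := odd_double_half m; rewrite (negbTE hodd) add0n -muln2 in hm2.
set s := (m./2 - 1)%N.
have hm : m = (2 * s + 2)%N by rewrite /s; lia.
have s2 : (2 <= s)%N by rewrite /s; lia.
set q := Num.sqrt (1 + 8 * s%:R : R).
have q0 : 0 <= q by apply: sqrtr_ge0.
have q2 : q ^+ 2 = 1 + 8 * s%:R by rewrite sqr_sqrtr // addr_ge0 // mulr_ge0 // ler0n.
have s2R : 2 <= s%:R :> R by rewrite (ler_nat R 2 s).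
have q3 : 3 < q.
  rewrite ltNge; apply/negP => hq.
  have : q ^+ 2 <= 9 by rewrite expr2; nra.
  rewrite q2; lra.
set lam := (1 + q) / 2.
have Hl : lam ^+ 2 = lam + 2 * s%:R.
  rewrite /lam; have := q2; rewrite !expr2 => q2'; lra.
have l2 : 2 < lam by rewrite /lam; lra.
have Hle : lam <= r.
  apply: (Hall _ (eB s) lam (eB_simple s) (eB_free s) _ (eB_noiso s) (@eB_spec _ s lam Hl l2)).
  by rewrite eB_nedges hm.
have rr1 : r <= r1 by apply: r1max.
case: (boolP [exists v, exists w, [&& e ustar v, e ustar w & e v w]]).
  by move=> /existsP[v /existsP[w /and3P[a b c]]]; exists v, w.
move=> /existsPn H.
have ind : forall v w, e ustar v -> e ustar w -> ~~ e v w.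
  move=> v w a b; have /existsPn/(_ w) := H v; by rewrite a b.
have := @main_bound _ _ _ _ _ _ sg Hx xpos xmax ind.
rewrite ne hm natrD natrM => hb.
have hsq : lam ^+ 2 <= r1 ^+ 2 by rewrite !expr2; apply: ler_pM; lra.
exfalso; clearbody lam q s; clear -Hle rr1 l2 Hl hb hsq; lra.
Qed.
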